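(* Let $\mathbf a^*=\{a^*_i\}_{i\in\mathbb Z}$ be a finitely supported mask such that the stationary subdivision scheme $\{S_{\mathbf a^*}\}$ (using the mask $\mathbf a^*$ at every level) is convergent, and suppose there is a positive integer $n$ with $\mu^*:=\|(S_{\mathbf q^*})^n\|<1$, where $\{S_{\mathbf q^*}\}$ is the difference scheme of $\{S_{\mathbf a^*}\}$. Let $\{S_{\mathbf a^{[k]}},\,k\ge 0\}$ be a local non-stationary subdivision scheme that reproduces constants and is asymptotically similar to $\{S_{\mathbf a^*}\}$, i.e. $\lim_{k\to\infty}\|\mathbf a^{[k]}-\mathbf a^*\|=0$. Then $\{S_{\mathbf a^{[k]}},\,k\ge 0\}$ is convergent, and for every $\eta\in((\mu^* )^{1/n},1)$ there exists a constant $C>0$ such that for every bounded initial sequence $\mathbf f^{[0]}$, $$\Big\|S^\infty_{\{\mathbf a^{[k]},\,k\ge0\}}\mathbf f^{[0]}-\mathcal{PL}(\mathbf f^{[k+1]})\Big\|\le C\,\eta^k\,\|\Delta\mathbf f^{[0]}\|,\qquad k\ge 0.$$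
   Context: A (binary, uniform) subdivision scheme $\{S_{\mathbf a^{[k]}},\,k\ge0\}$ is given by finitely supported masks $\mathbf a^{[k]}=\{a^{[k]}_i\}_{i\in\mathbb Z}$ and operators $(S_{\mathbf a^{[k]}}\mathbf f)_i=\sum_{j\in\mathbb Z}a^{[k]}_{i-2j}f_j$ on sequences $\mathbf f\in\mathbb R^{\mathbb Z}$; starting from $\mathbf f^{[0]}$ one sets $\mathbf f^{[k+1]}=S_{\mathbf a^{[k]}}\mathbf f^{[k]}$, the values $f^{[k]}_i$ being attached to the points $i2^{-k}$. The scheme is local: there is a positive integer $N$ with $\{i: a^{[k]}_i\neq0\}\subseteq[-N,N]$ for all $k$. It is stationary if $\mathbf a^{[k]}$ does not depend on $k$. All norms are sup-norms: for sequences $\|\mathbf f\|=\sup_i|f_i|$, and for operators $\|S_{\mathbf a}\|=\max\big(\sum_i|a_{2i}|,\sum_i|a_{2i+1}|\big)$ (the operator norm on bounded sequences with the sup-norm). The scheme reproduces constants if $\sum_i a^{[k]}_{2i}=\sum_i a^{[k]}_{2i+1}=1$ for all $k$; then the symbol $a^{[k]}(z)=\sum_i a^{[k]}_iz^i$ factors as $(1+z)q^{[k]}(z)$ with $q^{[k]}_i=\sum_{j\le i}(-1)^{i-j}a^{[k]}_j$, and $\{S_{\mathbf q^{[k]}},\,k\ge0\}$ is called the difference scheme; it satisfies $\Delta\mathbf f^{[k+1]}=S_{\mathbf q^{[k]}}\Delta\mathbf f^{[k]}$, where $(\Delta\mathbf f)_i=f_i-f_{i-1}$. $\mathcal{PL}(\mathbf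 f^{[k]})$ denotes the piecewise linear function on $\mathbb R$ interpolating $f^{[k]}_i$ at $i2^{-k}$. The scheme is convergent if for every bounded $\mathbf f^{[0]}$ the functions $\mathcal{PL}(\mathbf f^{[k]})$ converge uniformly on $\mathbb R$; the limit is denoted $S^\infty_{\{\mathbf a^{[k]},\,k\ge0\}}\mathbf f^{[0]}$. Two schemes $\{S_{\mathbf a^{[k]}}\}$, $\{S_{\mathbf a^{*[k]}}\}$ are asymptotically similar if $\lim_{k\to\infty}\|\mathbf a^{[k]}-\mathbf a^{*[k]}\|=0$. *)

(* Defs.v *)
From Stdlib Require Import Reals Lra Lia ZArith List.
From Coquelicot Require Import Coquelicot.
Open Scope R_scope.

Definition zseq := Z -> R.

Definition sumN (N : nat) (g : Z -> R) : R :=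
  fold_right Rplus 0 (map (fun m : nat => g (Z.of_nat m - Z.of_nat N)%Z)
                          (seq 0 (2 * N + 1))).

Definition supported_in (N : nat) (a : zseq) : Prop :=
  forall i : Z, (Z.of_nat N < Z.abs i)%Z -> a i = 0.

(* subdivision operator (S_a f)_i = sum_j a_{i-2j} f_j, for a mask supported
   in [-N,N]: sum over l = i - 2j in [-N,N] with l = i mod 2. *)
Definition subdiv (N : nat) (a : zseq) (f : zseq) : zseq :=
  fun i => sumN N (fun l => if Z.even (i - l) then a l * f ((i - l) / 2)%Z else 0).

Definition diffmask (N : nat) (a : zseq) : zseq :=
  fun i => sumN N (fun l => if (l <=? i)%Z
                           then (if Z.even (i - l) then a l else - a l) else 0).

Definition reproduces_constants (N : nat) (a : zseq) : Prop :=
  sumN N (fun l => if Z.even l then a l else 0) = 1 /\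
  sumN N (fun l => if Z.even l then 0 else a l) = 1.

(* mask norm ||S_a|| = max(sum |a_{2i}|, sum |a_{2i+1}|), a supported in [-N,N] *)
Definition mask_norm (N : nat) (a : zseq) : R :=
  Rmax (sumN N (fun l => if Z.even l then Rabs (a l) else 0))
       (sumN N (fun l => if Z.even l then 0 else Rabs (a l))).

Definition bounded_seq (f : zseq) : Prop := exists M : R, forall i, Rabs (f i) <= M.

Definition seq_norm (f : zseq) : R :=
  real (Lub_Rbar (fun x => exists i, x = Rabs (f i))).

Definition op_norm (T : zseq -> zseq) : R :=
  real (Lub_Rbar (fun x => exists f, bounded_seq f /\ seq_norm f <= 1 /\ x = seq_norm (T f))).

Definition Dseq (f : zseq) : zseq := fun i => f i - f (i - 1)%Z.

Fixpoint level (N : nat) (A : nat -> zseq) (f0 : zseq) (k : nat) : zseq :=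
  match k with
  | O => f0
  | S k' => subdiv N (A k') (level N A f0 k')
  end.

(* piecewise linear interpolant of values g_i at points i 2^-k *)
Definition PL (k : nat) (g : zseq) (x : R) : R :=
  let t := x * 2 ^ k in
  let i := Int_part t in
  g i + (t - IZR i) * (g (i + 1)%Z - g i).

Definition is_limit_function (N : nat) (A : nat -> zseq) (f0 : zseq) (F : R -> R) : Prop :=
  forall eps : R, 0 < eps -> exists K : nat, forall k : nat, (K <= k)%nat ->
    forall x : R, Rabs (PL k (level N A f0 k) x - F x) < eps.

Definition convergent (N : nat) (A : nat -> zseq) : Prop :=
  forall f0 : zseq, bounded_seq f0 -> exists F : R -> R, is_limit_function N A f0 F.

(* Main.v *)
Require Import Defs.
From Stdlib Require Import Reals ZArith.
From Coquelicot Require Import Coquelicot.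
From Stdlib Require Import Lra Lia List FunctionalExtensionality.
Open Scope R_scope.

Fixpoint sumZ (lo : Z) (len : nat) (g : Z -> R) : R :=
  match len with O => 0 | S l => g lo + sumZ (lo + 1)%Z l g end.

Lemma sumN_sumZ_gen N g : forall len s,
  fold_right Rplus 0 (map (fun m : nat => g (Z.of_nat m - Z.of_nat N)%Z) (seq s len))
  = sumZ (Z.of_nat s - Z.of_nat N) len g.
Proof.
  induction len; intros s; simpl; auto.
  rewrite IHlen. f_equal. f_equal. lia.
Qed.

Lemma sumN_sumZ N g : sumN N g = sumZ (- Z.of_nat N) (2 * N + 1) g.
Proof. unfold sumN. rewrite sumN_sumZ_gen. f_equal. Qed.

Lemma sumZ_ext_in lo len g h :
  (forall l, (lo <= l < lo + Z.of_nat len)%Z -> g l = h l) -> sumZ lo len g = sumZ lo len h.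
Proof.
  revert lo; induction len; intros lo H; simpl; auto.
  rewrite H by lia. rewrite (IHlen (lo+1)%Z); auto. intros; apply H; lia.
Qed.

Lemma sumZ_plus lo len g h : sumZ lo len (fun l => g l + h l) = sumZ lo len g + sumZ lo len h.
Proof. revert lo; induction len; intros; simpl; [lra|rewrite IHlen; lra]. Qed.

Lemma sumZ_minus lo len g h : sumZ lo len (fun l => g l - h l) = sumZ lo len g - sumZ lo len h.
Proof. revert lo; induction len; intros; simpl; [lra|rewrite IHlen; lra]. Qed.

Lemma sumZ_scal lo len c g : sumZ lo len (fun l => c * g l) = c * sumZ lo len g.
Proof. revert lo; induction len; intros; simpl; [lra|rewrite IHlen; lra]. Qed.

Lemma sumZ_const lo len c : sumZ lo len (fun _ => c) = INR len * c.
Proof. revert lo; induction len; intros; simpl sumZ; [simpl; lra|rewrite IHlen; rewrite S_INR; lra]. Qed.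

Lemma sumZ_le_in lo len g h :
  (forall l, (lo <= l < lo + Z.of_nat len)%Z -> g l <= h l) -> sumZ lo len g <= sumZ lo len h.
Proof.
  revert lo; induction len; intros lo H; simpl; [lra|].
  apply Rplus_le_compat. apply H; lia. apply IHlen; intros; apply H; lia.
Qed.

Lemma sumZ_abs lo len g : Rabs (sumZ lo len g) <= sumZ lo len (fun l => Rabs (g l)).
Proof.
  revert lo; induction len; intros; simpl. rewrite Rabs_R0; lra.
  eapply Rle_trans. apply Rabs_triang. specialize (IHlen (lo+1)%Z). lra.
Qed.

Lemma sumZ_zero lo len g :
  (forall l, (lo <= l < lo + Z.of_nat len)%Z -> g l = 0) -> sumZ lo len g = 0.
Proof.
  intros H. rewrite (sumZ_ext_in _ _ _ (fun _ => 0)) by auto. rewrite sumZ_const; lra.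
Qed.

Lemma sumZ_app lo a b g : sumZ lo (a + b) g = sumZ lo a g + sumZ (lo + Z.of_nat a) b g.
Proof.
  revert lo; induction a; intros; simpl. replace (lo + 0)%Z with lo by lia. lra.
  rewrite IHa. replace (lo + 1 + Z.of_nat a)%Z with (lo + Z.pos (Pos.of_succ_nat a))%Z by lia. lra.
Qed.

Lemma sumZ_shift lo len c g : sumZ lo len (fun l => g (l + c)%Z) = sumZ (lo + c) len g.
Proof.
  revert lo; induction len; intros; simpl; auto. rewrite IHlen.
  replace (lo + 1 + c)%Z with (lo + c + 1)%Z by lia. auto.
Qed.

Lemma sumZ_window p m d1 d2 lo' len' g :
  (forall l, (l < p \/ p + Z.of_nat m <= l)%Z -> g l = 0) ->
  lo' = (p - Z.of_nat d1)%Z -> len' = (d1 + m + d2)%nat ->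
  sumZ lo' len' g = sumZ p m g.
Proof.
  intros H -> ->. rewrite !sumZ_app.
  rewrite (sumZ_zero (p - Z.of_nat d1)) by (intros; apply H; lia).
  rewrite (sumZ_zero (_ + _)%Z d2) by (intros; apply H; lia).
  replace (p - Z.of_nat d1 + Z.of_nat d1)%Z with p by lia. lra.
Qed.

Lemma sumZ_delta lo len c v :
  sumZ lo len (fun l => if Z.eqb l c then v else 0) =
  if andb (lo <=? c)%Z (c <? lo + Z.of_nat len)%Z then v else 0.
Proof.
  revert lo; induction len; intros; simpl.
  - destruct (lo <=? c)%Z eqn:E1; destruct (c <? lo+0)%Z eqn:E2; simpl; auto.
    apply Z.leb_le in E1; apply Z.ltb_lt in E2; lia.
  - rewrite IHlen.
    destruct (Z.eqb_spec lo c).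
    + subst. replace (c + 1 <=? c)%Z with false by (symmetry; apply Z.leb_gt; lia).
      rewrite Z.leb_refl. simpl.
      replace (c <? c + Z.pos (Pos.of_succ_nat len))%Z with true by (symmetry; apply Z.ltb_lt; lia). lra.
    + destruct (lo + 1 <=? c)%Z eqn:E1; destruct (c <? lo + 1 + Z.of_nat len)%Z eqn:E2;
      destruct (lo <=? c)%Z eqn:E3; destruct (c <? lo + Z.pos (Pos.of_succ_nat len))%Z eqn:E4; simpl;
      rewrite ?Z.leb_le, ?Z.leb_gt, ?Z.ltb_lt, ?Z.ltb_ge in *; try lra; lia.
Qed.

Definition SA (N : nat) (a : zseq) : R := sumN N (fun l => Rabs (a l)).

Lemma SA_ge0 N a : 0 <= SA N a.
Proof.
  unfold SA. rewrite sumN_sumZ. rewrite <- (Rmult_0_r (INR (2*N+1))), <- (sumZ_const (- Z.of_nat N)).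
  apply sumZ_le_in. intros; apply Rabs_pos.
Qed.

Lemma diffmask_sub N a b i :
  diffmask N (fun l => a l - b l) i = diffmask N a i - diffmask N b i.
Proof.
  unfold diffmask. rewrite !sumN_sumZ, <- sumZ_minus. apply sumZ_ext_in; intros.
  destruct (l <=? i)%Z; [destruct (Z.even (i - l))|]; lra.
Qed.

Lemma diffmask_abs N a i : Rabs (diffmask N a i) <= SA N a.
Proof.
  unfold diffmask, SA. rewrite !sumN_sumZ. eapply Rle_trans. apply sumZ_abs.
  apply sumZ_le_in; intros.
  destruct (l <=? i)%Z; [destruct (Z.even (i - l))|]; rewrite ?Rabs_Ropp, ?Rabs_R0; try lra.
  apply Rabs_pos.
Qed.

Lemma diffmask_low N a i : (i < - Z.of_nat N)%Z -> diffmask N a i = 0.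
Proof.
  intros H. unfold diffmask. rewrite sumN_sumZ. apply sumZ_zero. intros.
  replace (l <=? i)%Z with false by (symmetry; apply Z.leb_gt; lia). auto.
Qed.

Definition Esum N (a : zseq) := sumN N (fun l => if Z.even l then a l else 0).
Definition Osum N (a : zseq) := sumN N (fun l => if Z.even l then 0 else a l).

Lemma diffmask_high N a i : Esum N a = Osum N a -> (Z.of_nat N <= i)%Z -> diffmask N a i = 0.
Proof.
  intros HE H. unfold diffmask.
  unfold Esum, Osum in HE. rewrite !sumN_sumZ in *.
  destruct (Z.even i) eqn:Ei.
  - rewrite (sumZ_ext_in _ _ _ (fun l => (if Z.even l then a l else 0) - (if Z.even l then 0 else a l))).
    rewrite sumZ_minus; lra.
    intros. replace (l <=? i)%Z with true by (symmetry; apply Z.leb_le; lia).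
    rewrite Z.even_sub, Ei. destruct (Z.even l); simpl; lra.
  - rewrite (sumZ_ext_in _ _ _ (fun l => (if Z.even l then 0 else a l) - (if Z.even l then a l else 0))).
    rewrite sumZ_minus; lra.
    intros. replace (l <=? i)%Z with true by (symmetry; apply Z.leb_le; lia).
    rewrite Z.even_sub, Ei. destruct (Z.even l); simpl; lra.
Qed.

Lemma diffmask_rec N a l : supported_in N a ->
  diffmask N a l - diffmask N a (l - 2)%Z = a l - a (l - 1)%Z.
Proof.
  intros Hs. unfold diffmask. rewrite !sumN_sumZ, <- sumZ_minus.
  rewrite (sumZ_ext_in _ _ _ (fun m => (if Z.eqb m l then a l else 0) - (if Z.eqb m (l-1) then a (l-1)%Z else 0))).
  - rewrite sumZ_minus, !sumZ_delta.
    f_equal.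
    + destruct andb eqn:E; auto. symmetry; apply Hs.
      apply Bool.andb_false_iff in E. rewrite Z.leb_gt, Z.ltb_ge in E. lia.
    + destruct andb eqn:E; auto. symmetry; apply Hs.
      apply Bool.andb_false_iff in E. rewrite Z.leb_gt, Z.ltb_ge in E. lia.
  - intros m _.
    destruct (Z.eqb_spec m l).
    + subst. rewrite Z.leb_refl. replace (l <=? l - 2)%Z with false by (symmetry; apply Z.leb_gt; lia).
      replace (l - l)%Z with 0%Z by lia. simpl.
      replace (l =? l-1)%Z with false by (symmetry; apply Z.eqb_neq; lia). lra.
    + destruct (Z.eqb_spec m (l-1)).
      * subst. replace (l - 1 <=? l)%Z with true by (symmetry; apply Z.leb_le; lia).
        replace (l - 1 <=? l - 2)%Z with false by (symmetry; apply Z.leb_gt; lia).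
        replace (l - (l - 1))%Z with 1%Z by lia. simpl. lra.
      * destruct (Z.leb_spec m (l-2)).
        -- replace (m <=? l)%Z with true by (symmetry; apply Z.leb_le; lia).
           replace (l - 2 - m)%Z with (l - m + (-2))%Z by lia.
           rewrite Z.even_add. simpl. destruct (Z.even (l - m)); simpl; lra.
        -- replace (m <=? l)%Z with false by (symmetry; apply Z.leb_gt; lia). lra.
Qed.

Definition Gt (i : Z) (f : zseq) (b : zseq) : zseq :=
  fun l => if Z.even (i - l) then b l * f ((i - l) / 2)%Z else 0.

Lemma Gt_zero i f b l : b l = 0 -> Gt i f b l = 0.
Proof. intros H; unfold Gt; rewrite H; destruct Z.even; lra. Qed.

Lemma Dsubdiv N a f : supported_in N a -> Esum N a = Osum N a ->
  Dseq (subdiv N a f) = subdiv N (diffmask N a) (Dseq f).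
Proof.
  intros Hs HE. apply functional_extensionality; intro i.
  unfold Dseq, subdiv. rewrite !sumN_sumZ.
  set (q := diffmask N a).
  set (a1 := fun l => a (l - 1)%Z).
  set (q2 := fun l => q (l - 2)%Z).
  assert (L1 : sumZ (- Z.of_nat N) (2*N+1) (fun l => if Z.even (i - l) then a l * f ((i - l) / 2)%Z else 0)
     = sumZ (- Z.of_nat N - 2) (2*N+5) (Gt i f a)).
  { symmetry. apply (sumZ_window _ _ 2 2). intros; apply Gt_zero, Hs; lia. lia. lia. }
  assert (L2 : sumZ (- Z.of_nat N) (2*N+1) (fun l => if Z.even (i - 1 - l) then a l * f ((i - 1 - l) / 2)%Z else 0)
     = sumZ (- Z.of_nat N - 2) (2*N+5) (Gt i f a1)).
  { rewrite (sumZ_window (- Z.of_nat N + 1) (2*N+1) 3 1 (- Z.of_nat N - 2) (2*N+5)); [|idtac|lia|lia]. 2:{ intros; apply Gt_zero; unfold a1; apply Hs. idtac. lia. }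
    rewrite <- sumZ_shift. apply sumZ_ext_in. intros l _. unfold Gt, a1.
    replace (i - (l+1))%Z with (i - 1 - l)%Z by lia. replace (l + 1 - 1)%Z with l by lia. auto. }
  assert (R1 : sumZ (- Z.of_nat N) (2*N+1) (fun l => if Z.even (i - l) then q l * (f ((i - l) / 2)%Z - f ((i - l) / 2 - 1)%Z) else 0)
     = sumZ (- Z.of_nat N) (2*N+1) (Gt i f q) - sumZ (- Z.of_nat N + 2) (2*N+1) (Gt i f q2)).
  { rewrite <- sumZ_shift, <- sumZ_minus. apply sumZ_ext_in. intros l _. unfold Gt, q2.
    replace (i - (l+2))%Z with (i - l + (-1) * 2)%Z by lia.
    rewrite Z.div_add by lia. rewrite Z.even_add. simpl Z.even at 2. replace (l + 2 - 2)%Z with l by lia.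
    replace (Z.even (-1 * 2)) with true by reflexivity. replace ((i - l) / 2 + -1)%Z with ((i - l) / 2 - 1)%Z by lia. destruct (Z.even (i - l)); simpl; lra. }
  assert (R2 : sumZ (- Z.of_nat N) (2*N+1) (Gt i f q) = sumZ (- Z.of_nat N - 2) (2*N+5) (Gt i f q)).
  { symmetry. apply (sumZ_window _ _ 2 2). intros; apply Gt_zero. unfold q.
    destruct H. apply diffmask_low; lia. apply diffmask_high; auto; lia. lia. lia. }
  assert (R3 : sumZ (- Z.of_nat N + 2) (2*N+1) (Gt i f q2) = sumZ (- Z.of_nat N - 2) (2*N+5) (Gt i f q2)).
  { symmetry. apply (sumZ_window _ _ 4 0). intros; apply Gt_zero. unfold q2, q.
    destruct H. apply diffmask_low; lia. apply diffmask_high; auto; lia. lia. lia. }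
  rewrite L1, L2, R1, R2, R3, <- !sumZ_minus. apply sumZ_ext_in. intros l _.
  unfold Gt. destruct (Z.even (i - l)); [|lra].
  rewrite <- !Rmult_minus_distr_r. f_equal. unfold q2, a1, q. rewrite diffmask_rec; auto.
Qed.

Lemma sumN_le_in N g h : (forall l, (- Z.of_nat N <= l <= Z.of_nat N)%Z -> g l <= h l) ->
  sumN N g <= sumN N h.
Proof. intros H. rewrite !sumN_sumZ. apply sumZ_le_in. intros; apply H; lia. Qed.

Lemma subdiv_bound N a u M i : (forall j, Rabs (u j) <= M) ->
  Rabs (subdiv N a u i) <= SA N a * M.
Proof.
  intros H. unfold subdiv, SA. rewrite !sumN_sumZ. eapply Rle_trans. apply sumZ_abs.
  rewrite Rmult_comm, <- sumZ_scal.
  apply sumZ_le_in; intros. destruct Z.even.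
  - rewrite Rabs_mult, (Rmult_comm M). apply Rmult_le_compat_l. apply Rabs_pos. apply H.
  - rewrite Rabs_R0. specialize (H 0%Z). pose proof (Rabs_pos (u 0%Z)). pose proof (Rabs_pos (a l)). nra.
Qed.

Lemma subdiv_sub_f N a f g i : subdiv N a f i - subdiv N a g i = subdiv N a (fun j => f j - g j) i.
Proof.
  unfold subdiv. rewrite !sumN_sumZ, <- sumZ_minus. apply sumZ_ext_in; intros.
  destruct Z.even; lra.
Qed.

Lemma subdiv_sub_mask N b c f i : subdiv N b f i - subdiv N c f i = subdiv N (fun l => b l - c l) f i.
Proof.
  unfold subdiv. rewrite !sumN_sumZ, <- sumZ_minus. apply sumZ_ext_in; intros.
  destruct Z.even; lra.
Qed.

Lemma subdiv_scal N a c f : subdiv N a (fun j => c * f j) = fun i => c * subdiv N a f i.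
Proof.
  apply functional_extensionality; intro i. unfold subdiv. rewrite !sumN_sumZ, <- sumZ_scal.
  apply sumZ_ext_in; intros. destruct Z.even; lra.
Qed.

Lemma iter_scal N q m c f : Nat.iter m (subdiv N q) (fun j => c * f j) = fun i => c * Nat.iter m (subdiv N q) f i.
Proof. induction m; simpl; auto. rewrite IHm, subdiv_scal. auto. Qed.

Lemma iter_bound N q m f M : (forall j, Rabs (f j) <= M) ->
  forall i, Rabs (Nat.iter m (subdiv N q) f i) <= SA N q ^ m * M.
Proof.
  induction m; intros H i; simpl. specialize (H i); lra.
  eapply Rle_trans. apply subdiv_bound. intros; apply IHm; auto. right; ring.
Qed.

Lemma SA_diffmask N a : SA N (diffmask N a) <= INR (2*N+1) * SA N a.
Proof.
  unfold SA at 1. rewrite sumN_sumZ, <- (sumZ_const (- Z.of_nat N)).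
  apply sumZ_le_in; intros. apply diffmask_abs.
Qed.

Lemma SA_le_mask_norm N a : SA N a <= 2 * mask_norm N a.
Proof.
  unfold SA, mask_norm.
  rewrite (sumN_sumZ N (fun l => Rabs (a l))).
  rewrite (sumZ_ext_in _ _ _ (fun l => (if Z.even l then Rabs (a l) else 0) + (if Z.even l then 0 else Rabs (a l))))
   by (intros; destruct Z.even; lra).
  rewrite sumZ_plus, <- !sumN_sumZ.
  pose proof (Rmax_l (sumN N (fun l => if Z.even l then Rabs (a l) else 0)) (sumN N (fun l => if Z.even l then 0 else Rabs (a l)))).
  pose proof (Rmax_r (sumN N (fun l => if Z.even l then Rabs (a l) else 0)) (sumN N (fun l => if Z.even l then 0 else Rabs (a l)))).
  lra.
Qed.

Lemma SA_triangle N a b : SA N a <= SA N b + SA N (fun l => a l - b l).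
Proof.
  unfold SA. rewrite !sumN_sumZ, <- sumZ_plus. apply sumZ_le_in; intros.
  replace (a l) with (b l + (a l - b l)) at 1 by lra. apply Rabs_triang.
Qed.

Lemma lub_facts (E : R -> Prop) x0 M : E x0 -> (forall x, E x -> x <= M) ->
  (forall x, E x -> x <= real (Lub_Rbar E)) /\ real (Lub_Rbar E) <= M.
Proof.
  intros H0 HM. destruct (Lub_Rbar_correct E) as [Hub Hl].
  assert (HlM : Rbar_le (Lub_Rbar E) (Finite M)) by (apply Hl; intros x Hx; simpl; apply HM; auto).
  unfold is_ub_Rbar in Hub. revert Hub HlM.
  destruct (Lub_Rbar E) as [r| |]; intros Hub HlM.
  - split; [intros x Hx; specialize (Hub x Hx); simpl in Hub; exact Hub | simpl in HlM; exact HlM].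
  - simpl in HlM. contradiction.
  - specialize (Hub x0 H0). simpl in Hub. contradiction.
Qed.

Lemma seq_norm_ge f i : bounded_seq f -> Rabs (f i) <= seq_norm f.
Proof.
  intros [M HM]. unfold seq_norm.
  apply (lub_facts _ (Rabs (f 0%Z)) M). exists 0%Z; auto.
  intros x [j ->]; auto. exists i; auto.
Qed.

Lemma seq_norm_le f M : (forall i, Rabs (f i) <= M) -> seq_norm f <= M.
Proof.
  intros HM. unfold seq_norm.
  apply (lub_facts _ (Rabs (f 0%Z)) M). exists 0%Z; auto.
  intros x [j ->]; auto.
Qed.

Lemma seq_norm_ge0 f : bounded_seq f -> 0 <= seq_norm f.
Proof. intros H. eapply Rle_trans. apply Rabs_pos. apply (seq_norm_ge f 0%Z H). Qed.

Lemma op_bound N q n g M : 0 <= M -> (forall i, Rabs (g i) <= M) ->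
  forall i, Rabs (Nat.iter n (subdiv N q) g i) <= op_norm (Nat.iter n (subdiv N q)) * M.
Proof.
  intros HM0 HM i. destruct (Req_dec M 0) as [E0|Epos].
  - subst. assert (g = fun j => 0 * g j).
    { apply functional_extensionality; intro j. specialize (HM j). pose proof (Rabs_pos (g j)).
      assert (g j = 0) by (apply Rabs_eq_0; lra). rewrite H0; lra. }
    rewrite H, iter_scal. rewrite Rmult_0_l, Rabs_R0. lra.
  - assert (Mpos : 0 < M) by lra.
    set (g' := fun j => / M * g j).
    assert (Hg' : forall j, Rabs (g' j) <= 1).
    { intros j. unfold g'. rewrite Rabs_mult, Rabs_inv, (Rabs_pos_eq M) by lra.
      specialize (HM j). apply (Rmult_le_reg_l M); auto. field_simplify; lra. }
    assert (Hb : forall f, bounded_seq f -> seq_norm f <= 1 ->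
              seq_norm (Nat.iter n (subdiv N q) f) <= SA N q ^ n).
    { intros f Bf Hf. apply seq_norm_le. intros j.
      pose proof (iter_bound N q n f (seq_norm f)). 
      eapply Rle_trans. apply H. intros; apply seq_norm_ge; auto.
      pose proof (pow_le _ n (SA_ge0 N q)). nra. }
    assert (Bg' : bounded_seq g') by (exists 1; auto).
    assert (Ng' : seq_norm g' <= 1) by (apply seq_norm_le; auto).
    assert (HT : seq_norm (Nat.iter n (subdiv N q) g') <= op_norm (Nat.iter n (subdiv N q))).
    { unfold op_norm. apply (lub_facts _ (seq_norm (Nat.iter n (subdiv N q) g')) (SA N q ^ n)).
      exists g'; auto. intros x [f [Hf1 [Hf2 ->]]]. apply Hb; auto. exists g'; auto. }
    assert (BT : bounded_seq (Nat.iter n (subdiv N q) g')).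
    { exists (SA N q ^ n * 1). apply iter_bound; auto. }
    pose proof (seq_norm_ge _ i BT) as Hi.
    assert (E : Nat.iter n (subdiv N q) g' i = / M * Nat.iter n (subdiv N q) g i) by (unfold g'; rewrite iter_scal; auto).
    set (Tg' := Nat.iter n (subdiv N q) g') in *. rewrite E in Hi. rewrite Rabs_mult, Rabs_inv, (Rabs_pos_eq M) in Hi by lra.
    apply (Rmult_le_compat_l M) in Hi; [|lra].
    replace (M * (/ M * Rabs (Nat.iter n (subdiv N q) g i))) with (Rabs (Nat.iter n (subdiv N q) g i)) in Hi by (field; lra).
    nra.
Qed.

Lemma dist_nat g D : (forall i, Rabs (g i - g (i - 1)%Z) <= D) ->
  forall d j, Rabs (g (j + Z.of_nat d)%Z - g j) <= INR d * D.
Proof.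
  intros H d; induction d; intros j.
  - simpl. replace (j + 0)%Z with j by lia. unfold Rminus; rewrite Rplus_opp_r, Rabs_R0; lra.
  - rewrite S_INR. replace (g (j + Z.of_nat (S d))%Z - g j) with
      ((g (j + Z.of_nat (S d))%Z - g (j + Z.of_nat (S d) - 1)%Z) + (g (j + Z.of_nat d)%Z - g j)).
    + eapply Rle_trans. apply Rabs_triang. specialize (IHd j). specialize (H (j + Z.of_nat (S d))%Z). lra.
    + replace (j + Z.of_nat (S d) - 1)%Z with (j + Z.of_nat d)%Z by lia. lra.
Qed.

Lemma dist_bound g D : (forall i, Rabs (g i - g (i - 1)%Z) <= D) ->
  forall p j, Rabs (g p - g j) <= IZR (Z.abs (p - j)) * D.
Proof.
  intros H p j. destruct (Z.le_ge_cases j p).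
  - pose proof (dist_nat g D H (Z.to_nat (p - j)) j) as X.
    rewrite Z2Nat.id in X by lia. replace (j + (p - j))%Z with p in X by lia.
    rewrite INR_IZR_INZ, Z2Nat.id in X by lia. rewrite Z.abs_eq by lia. auto.
  - pose proof (dist_nat g D H (Z.to_nat (j - p)) p) as X.
    rewrite Z2Nat.id in X by lia. replace (p + (j - p))%Z with j in X by lia.
    rewrite INR_IZR_INZ, Z2Nat.id in X by lia. rewrite Z.abs_neq by lia. rewrite Rabs_minus_sym.
    replace (- (p - j))%Z with (j - p)%Z by lia. auto.
Qed.

Lemma repro_sum N a m : reproduces_constants N a ->
  sumN N (fun l => if Z.even (m - l) then a l else 0) = 1.
Proof.
  intros [HE HO]. destruct (Z.even m) eqn:Em.
  - rewrite <- HE. rewrite !sumN_sumZ. apply sumZ_ext_in; intros.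
    rewrite Z.even_sub, Em. destruct (Z.even l); auto.
  - rewrite <- HO. rewrite !sumN_sumZ. apply sumZ_ext_in; intros.
    rewrite Z.even_sub, Em. destruct (Z.even l); auto.
Qed.

Lemma near_bound N a g D j m : supported_in N a -> reproduces_constants N a ->
  (forall i, Rabs (g i - g (i - 1)%Z) <= D) -> 0 <= D ->
  (2 * j <= m <= 2 * j + 2)%Z ->
  Rabs (subdiv N a g m - g j) <= SA N a * ((INR N + 1) * D).
Proof.
  intros Hs Hr HD D0 Hm.
  assert (E : subdiv N a g m - g j = sumN N (fun l => if Z.even (m - l) then a l * (g ((m - l)/2)%Z - g j) else 0)).
  { rewrite <- (Rmult_1_r (g j)) at 1. rewrite <- (repro_sum N a m Hr).
    unfold subdiv. rewrite !sumN_sumZ, <- sumZ_scal, <- sumZ_minus. apply sumZ_ext_in; intros.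
    destruct Z.even; ring. }
  rewrite E. unfold SA. rewrite !sumN_sumZ. eapply Rle_trans. apply sumZ_abs.
  rewrite Rmult_comm, <- sumZ_scal. apply sumZ_le_in. intros l Hl.
  pose proof (Rabs_pos (a l)).
  assert (HN : 0 <= INR N) by apply pos_INR.
  destruct (Z.even (m - l)).
  - rewrite Rabs_mult. rewrite (Rmult_comm _ (Rabs (a l))). apply Rmult_le_compat_l; auto.
    eapply Rle_trans. apply dist_bound; auto. apply Rmult_le_compat_r; auto.
    replace (INR N + 1) with (IZR (Z.of_nat N + 1)) by (rewrite plus_IZR, <- INR_IZR_INZ; simpl; ring).
    apply IZR_le.
    assert (Z.abs ((m - l) / 2 - j) <= Z.of_nat N + 1)%Z.
    { Z.div_mod_to_equations. lia. }
    lia.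
  - rewrite Rabs_R0. apply Rmult_le_pos; [|auto]. apply Rmult_le_pos; lra.
Qed.

Lemma PL_step N a g D k x : supported_in N a -> reproduces_constants N a ->
  (forall i, Rabs (g i - g (i - 1)%Z) <= D) -> 0 <= D ->
  Rabs (PL (S k) (subdiv N a g) x - PL k g x) <= (SA N a * (INR N + 1) + 1) * D.
Proof.
  intros Hs Hr HD D0. unfold PL. cbv zeta.
  set (s := x * 2 ^ k). replace (x * 2 ^ S k) with (2 * s) by (unfold s; simpl; ring).
  set (j := Int_part s). set (i := Int_part (2 * s)).
  destruct (base_Int_part s) as [Hj1 Hj2]. destruct (base_Int_part (2 * s)) as [Hi1 Hi2].
  fold j in Hj1, Hj2. fold i in Hi1, Hi2.
  assert (Hij : (2 * j <= i <= 2 * j + 1)%Z).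
  { assert (2 * j < i + 1)%Z by (apply lt_IZR; rewrite plus_IZR, mult_IZR; simpl; lra).
    assert (i < 2 * j + 2)%Z by (apply lt_IZR; rewrite plus_IZR, mult_IZR; simpl; lra).
    lia. }
  set (X := SA N a * ((INR N + 1) * D)).
  pose proof (near_bound N a g D j i Hs Hr HD D0 ltac:(lia)) as B1.
  pose proof (near_bound N a g D j (i+1) Hs Hr HD D0 ltac:(lia)) as B2.
  pose proof (HD (j + 1)%Z) as B3. replace (j + 1 - 1)%Z with j in B3 by lia.
  fold X in B1, B2.
  set (h := subdiv N a g) in *.
  set (th := 2 * s - IZR i). set (ph := s - IZR j).
  assert (T1 : 0 <= th <= 1) by (unfold th; lra).
  assert (T2 : 0 <= ph <= 1) by (unfold ph; lra).
  apply Rabs_le_between in B1. apply Rabs_le_between in B2. apply Rabs_le_between in B3.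
  apply Rabs_le_between.
  replace ((SA N a * (INR N + 1) + 1) * D) with (X + D) by (unfold X; ring).
  split; nra.
Qed.

Lemma finite_max (u : nat -> R) K : exists M, forall k, (k < K)%nat -> u k <= M.
Proof.
  induction K. exists 0; intros; lia.
  destruct IHK as [M HM]. exists (Rmax M (u K)). intros k Hk.
  destruct (Nat.eq_dec k K). subst; apply Rmax_r.
  eapply Rle_trans. apply HM; lia. apply Rmax_l.
Qed.

Lemma eventually_bounded (u : nat -> R) K c : (forall k, (K <= k)%nat -> u k <= c) ->
  exists M, forall k, u k <= M.
Proof.
  intros H. destruct (finite_max u K) as [M HM]. exists (Rmax M c). intros k.
  destruct (Nat.lt_ge_cases k K). eapply Rle_trans. apply HM; auto. apply Rmax_l.
  eapply Rle_trans. apply H; auto. apply Rmax_r.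
Qed.

Lemma Dlevel N A f0 k : supported_in N (A k) -> reproduces_constants N (A k) ->
  Dseq (level N A f0 (S k)) = subdiv N (diffmask N (A k)) (Dseq (level N A f0 k)).
Proof.
  intros Hs [HE HO]. simpl. apply Dsubdiv; auto. unfold Esum, Osum. rewrite HE, HO; auto.
Qed.

Lemma core N astar A n eta :
  (0 < n)%nat ->
  (forall k, supported_in N (A k)) ->
  (forall k, reproduces_constants N (A k)) ->
  (forall eps, 0 < eps -> exists K : nat, forall k, (K <= k)%nat ->
      mask_norm N (fun i => A k i - astar i) < eps) ->
  0 < eta -> eta < 1 ->
  op_norm (Nat.iter n (subdiv N (diffmask N astar))) < eta ^ n ->
  exists K, 0 < K /\ forall f0, bounded_seq f0 -> forall k x,
    Rabs (PL (S k) (level N A f0 (S k)) x - PL k (level N A f0 k) x) <= K * eta ^ k * seq_norm (Dseq f0).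
Proof.
  intros Hn Hs Hr Hsim He0 He1 Hmu.
  set (mu := op_norm (Nat.iter n (subdiv N (diffmask N astar)))) in *.
  destruct (Hsim 1 ltac:(lra)) as [K1 HK1].
  destruct (eventually_bounded (fun k => SA N (A k)) K1 (SA N astar + 2)) as [alpha0 Halpha0].
  { intros k Hk. specialize (HK1 k Hk). pose proof (SA_triangle N (A k) astar).
    pose proof (SA_le_mask_norm N (fun l => A k l - astar l)). simpl. lra. }
  set (alpha := Rmax alpha0 0).
  assert (Halpha : forall k, SA N (A k) <= alpha) by (intros; eapply Rle_trans; [apply Halpha0|apply Rmax_l]).
  assert (alpha0' : 0 <= alpha) by apply Rmax_r.
  set (qs := diffmask N astar). set (Qs := SA N qs). set (B := Qs + 1).
  assert (Qs0 : 0 <= Qs) by apply SA_ge0.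
  assert (B1 : 1 <= B) by (unfold B; lra).
  assert (Bn : 0 < B ^ n) by (apply pow_lt; lra).
  assert (Hn' : 0 < INR n) by (apply lt_0_INR; lia).
  set (delta := Rmin 1 ((eta ^ n - mu) / (INR n * B ^ n + 1))).
  assert (d0 : 0 < delta).
  { unfold delta. apply Rmin_pos. lra. apply Rdiv_lt_0_compat. lra. nra. }
  assert (d1 : delta <= 1) by apply Rmin_l.
  assert (d2 : INR n * B ^ n * delta <= eta ^ n - mu).
  { assert (delta <= (eta ^ n - mu) / (INR n * B ^ n + 1)) by apply Rmin_r.
    apply (Rmult_le_compat_r (INR n * B ^ n + 1)) in H; [|nra].
    unfold Rdiv in H. rewrite Rmult_assoc, Rinv_l in H by nra. nra. }
  assert (N21 : 0 < INR (2 * N + 1)) by (apply lt_0_INR; lia).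
  destruct (Hsim (delta / (2 * INR (2 * N + 1)))) as [K0 HK0].
  { apply Rdiv_lt_0_compat; lra. }
  assert (Hdel : forall k, (K0 <= k)%nat -> SA N (fun l => diffmask N (A k) l - qs l) <= delta).
  { intros k Hk. specialize (HK0 k Hk).
    replace (fun l => diffmask N (A k) l - qs l) with (diffmask N (fun l => A k l - astar l))
      by (apply functional_extensionality; intro l; apply diffmask_sub).
    eapply Rle_trans. apply SA_diffmask. pose proof (SA_le_mask_norm N (fun l => A k l - astar l)).
    apply (Rmult_lt_compat_l (2 * INR (2 * N + 1))) in HK0; [|lra].
    replace (2 * INR (2*N+1) * (delta / (2 * INR (2*N+1)))) with delta in HK0 by (field; lra).
    nra. }
  set (B' := INR (2 * N + 1) * alpha + 1).
  assert (B'1 : 1 <= B') by (unfold B'; nra).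
  set (C1 := (B' / eta) ^ (K0 + n)).
  set (c := alpha * (INR N + 1) + 1).
  assert (HN : 0 <= INR N) by apply pos_INR.
  assert (c1 : 1 <= c) by (unfold c; nra).
  assert (C1p : 0 < C1) by (unfold C1; apply pow_lt; apply Rdiv_lt_0_compat; lra).
  exists (c * C1). split. nra.
  intros f0 Hf0.
  set (D0 := seq_norm (Dseq f0)).
  assert (HD0 : forall i, Rabs (Dseq f0 i) <= D0).
  { intros i. apply seq_norm_ge. destruct Hf0 as [M HM]. exists (M + M). intros j. unfold Dseq.
    unfold Rminus. eapply Rle_trans. apply Rabs_triang. rewrite Rabs_Ropp. pose proof (HM j). pose proof (HM (j-1)%Z). lra. }
  assert (D00 : 0 <= D0) by (eapply Rle_trans; [apply Rabs_pos|apply (HD0 0%Z)]).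
  set (L := level N A f0).
  assert (Hgrow : forall k M, (forall i, Rabs (Dseq (L k) i) <= M) -> forall i, Rabs (Dseq (L (S k)) i) <= B' * M).
  { intros k M HM i. assert (M0 : 0 <= M) by (eapply Rle_trans; [apply Rabs_pos|apply (HM 0%Z)]).
    unfold L. rewrite Dlevel by auto. eapply Rle_trans. apply subdiv_bound. apply HM.
    apply Rmult_le_compat_r; auto. eapply Rle_trans. apply SA_diffmask. unfold B'.
    specialize (Halpha k). nra. }
  assert (Hgrowk : forall k i, Rabs (Dseq (L k) i) <= B' ^ k * D0).
  { induction k; intros i. simpl. rewrite Rmult_1_l. apply HD0.
    eapply Rle_trans. apply Hgrow. apply IHk. simpl. lra. }
  assert (Hblock : forall j M, (K0 <= j)%nat -> 0 <= M -> (forall i, Rabs (Dseq (L j) i) <= M) ->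
     forall i, Rabs (Dseq (L (j + n)%nat) i) <= eta ^ n * M).
  { intros j M Hj M0 HM.
    assert (Hind : forall m, (forall i, Rabs (Dseq (L (j + m)%nat) i) <= B ^ m * M) /\
        (forall i, Rabs (Dseq (L (j + m)%nat) i - Nat.iter m (subdiv N qs) (Dseq (L j)) i) <= INR m * B ^ m * delta * M)).
    { induction m.
      - rewrite Nat.add_0_r. split; intros i; simpl. rewrite Rmult_1_l; auto.
        unfold Rminus. rewrite Rplus_opp_r, Rabs_R0. lra.
      - destruct IHm as [IH1 IH2].
        assert (Bm : 0 <= B ^ m * M) by (apply Rmult_le_pos; auto; apply pow_le; lra).
        assert (Hq := Hdel (j + m)%nat ltac:(lia)).
        assert (EL : Dseq (L (j + S m)%nat) = subdiv N (diffmask N (A (j + m)%nat)) (Dseq (L (j + m)%nat))).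
        { rewrite Nat.add_succ_r. unfold L. apply Dlevel; auto. }
        assert (Edec : forall i, Dseq (L (j + S m)%nat) i = subdiv N qs (Dseq (L (j + m)%nat)) i +
            subdiv N (fun l => diffmask N (A (j + m)%nat) l - qs l) (Dseq (L (j + m)%nat)) i).
        { intros i. rewrite EL, <- subdiv_sub_mask. ring. }
        split; intros i.
        + rewrite Edec. eapply Rle_trans. apply Rabs_triang.
          pose proof (subdiv_bound N qs _ _ i IH1) as X1.
          pose proof (subdiv_bound N (fun l => diffmask N (A (j + m)%nat) l - qs l) _ _ i IH1) as X2.
          fold Qs in X1. simpl. unfold B in *.
          assert (SA N (fun l => diffmask N (A (j + m)%nat) l - qs l) * (B ^ m * M) <= 1 * ((Qs + 1) ^ m * M)).
          { apply Rmult_le_compat_r; [exact Bm|lra]. }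
          unfold B in X2. nra.
        + simpl Nat.iter. rewrite Edec.
          replace (subdiv N qs (Dseq (L (j + m)%nat)) i +
             subdiv N (fun l => diffmask N (A (j + m)%nat) l - qs l) (Dseq (L (j + m)%nat)) i -
             subdiv N qs (Nat.iter m (subdiv N qs) (Dseq (L j))) i)
           with (subdiv N (fun l => diffmask N (A (j + m)%nat) l - qs l) (Dseq (L (j + m)%nat)) i +
             subdiv N qs (fun k => Dseq (L (j + m)%nat) k - Nat.iter m (subdiv N qs) (Dseq (L j)) k) i)
           by (rewrite <- subdiv_sub_f; ring).
          eapply Rle_trans. apply Rabs_triang.
          pose proof (subdiv_bound N (fun l => diffmask N (A (j + m)%nat) l - qs l) _ _ i IH1) as X2.
          pose proof (subdiv_bound N qs _ _ i IH2) as X1. fold Qs in X1.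
          assert (SA N (fun l => diffmask N (A (j + m)%nat) l - qs l) * (B ^ m * M) <= delta * (B ^ m * M)).
          { apply Rmult_le_compat_r; [exact Bm|lra]. }
          assert (Z0 : 0 <= B ^ m * delta * M) by nra.
          assert (Hm : 0 <= INR m) by apply pos_INR.
          rewrite S_INR. simpl pow.
          assert (W : 0 <= INR m * B ^ m * delta * M) by (rewrite !Rmult_assoc; apply Rmult_le_pos; [exact Hm|nra]).
          assert (QB : Qs <= B) by (unfold B; lra).
          assert (Qs * (INR m * B ^ m * delta * M) <= B * (INR m * B ^ m * delta * M)) by (apply Rmult_le_compat_r; [exact W|exact QB]).
          assert (delta * (B ^ m * M) <= B * (B ^ m * delta * M)) by nra.
          nra. }
    destruct (Hind n) as [_ H2]. intros i. specialize (H2 i).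
    pose proof (op_bound N qs n (Dseq (L j)) M M0 HM i) as H3. fold mu in H3.
    assert (Rabs (Dseq (L (j + n)%nat) i) <= Rabs (Nat.iter n (subdiv N qs) (Dseq (L j)) i) + INR n * B ^ n * delta * M).
    { replace (Dseq (L (j + n)%nat) i) with ((Dseq (L (j + n)%nat) i - Nat.iter n (subdiv N qs) (Dseq (L j)) i) + Nat.iter n (subdiv N qs) (Dseq (L j)) i) at 1 by ring.
      eapply Rle_trans. apply Rabs_triang. lra. }
    assert (INR n * B ^ n * delta * M <= (eta ^ n - mu) * M) by (apply Rmult_le_compat_r; lra). change (op_norm (Nat.iter n (subdiv N qs))) with mu in H3. lra. }
  assert (Hdec : forall k i, Rabs (Dseq (L k) i) <= C1 * eta ^ k * D0).
  { intros k. induction k as [k IHk] using (well_founded_induction lt_wf). intros i.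
    destruct (Nat.lt_ge_cases k (K0 + n)).
    - eapply Rle_trans. apply Hgrowk. apply Rmult_le_compat_r; auto.
      unfold C1. replace (B' ^ k) with ((B' / eta) ^ k * eta ^ k).
      2:{ rewrite <- Rpow_mult_distr. f_equal. field. lra. }
      apply Rmult_le_compat_r. apply pow_le; lra. apply Rle_pow. 
      apply (Rmult_le_reg_r eta); auto. unfold Rdiv. rewrite Rmult_assoc, Rinv_l; lra. lia.
    - replace k with ((k - n) + n)%nat by lia.
      eapply Rle_trans. apply (Hblock (k - n)%nat (C1 * eta ^ (k - n) * D0)). lia. pose proof (pow_le eta (k - n) ltac:(lra)). apply Rmult_le_pos; [apply Rmult_le_pos|]; lra. apply IHk. lia.
      rewrite pow_add. right; ring. }
  intros k x.
  eapply Rle_trans. apply (PL_step N (A k) (L k) (C1 * eta ^ k * D0) k x); auto.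
  - intros i. apply (Hdec k i).
  - pose proof (pow_le eta k ltac:(lra)). apply Rmult_le_pos; [apply Rmult_le_pos|]; lra.
  - assert (SA N (A k) * (INR N + 1) + 1 <= c) by (unfold c; apply Rplus_le_compat_r, Rmult_le_compat_r; [lra|apply Halpha]).
    pose proof (pow_le eta k ltac:(lra)).
    assert (0 <= C1 * eta ^ k * D0) by (apply Rmult_le_pos; [apply Rmult_le_pos|]; lra).
    replace (c * C1 * eta ^ k * D0) with (c * (C1 * eta ^ k * D0)) by ring.
    apply Rmult_le_compat_r; lra.
Qed.

Lemma pow_lt_S r e : 0 <= r -> r < e -> forall n, r ^ (S n) < e ^ (S n).
Proof.
  intros H0 H1 n. induction n. simpl; lra.
  change (r * r ^ S n < e * e ^ S n).
  pose proof (pow_le r (S n) H0). nra.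
Qed.

Lemma bernoulli x : 0 <= x <= 1 -> forall n, 1 - INR n * x <= (1 - x) ^ n.
Proof.
  intros Hx n. induction n. simpl; lra.
  rewrite S_INR. simpl. pose proof (pos_INR n). nra.
Qed.

Lemma tele (u : nat -> R) K eta D : 0 < eta < 1 -> 0 <= K * D ->
  (forall k, Rabs (u (S k) - u k) <= K * eta ^ k * D) ->
  forall k m, (k <= m)%nat -> Rabs (u m - u k) <= K * D * eta ^ k / (1 - eta).
Proof.
  intros He HKD H k m Hkm.
  assert (X : forall d, Rabs (u (k + d)%nat - u k) <= K * D * (eta ^ k - eta ^ (k + d)) / (1 - eta)).
  { induction d.
    - rewrite Nat.add_0_r. unfold Rminus. rewrite Rplus_opp_r, Rabs_R0, Rplus_opp_r.
      unfold Rdiv. rewrite Rmult_0_r, Rmult_0_l. lra.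
    - rewrite Nat.add_succ_r. replace (u (S (k + d)) - u k) with ((u (S (k+d)) - u (k + d)%nat) + (u (k+d)%nat - u k)) by ring.
      eapply Rle_trans. apply Rabs_triang. specialize (H (k + d)%nat).
      replace (K * D * (eta ^ k - eta ^ S (k + d)) / (1 - eta)) with
        (K * eta ^ (k + d) * D + K * D * (eta ^ k - eta ^ (k + d)) / (1 - eta)).
      lra. simpl. field. lra. }
  replace m with (k + (m - k))%nat by lia. eapply Rle_trans. apply X.
  unfold Rdiv. apply Rmult_le_compat_r. left; apply Rinv_0_lt_compat; lra.
  pose proof (pow_le eta (k + (m - k)) ltac:(lra)). nra.
Qed.

Lemma tail (u : nat -> R) L b k : (forall m, (k <= m)%nat -> Rabs (u m - u k) <= b) ->
  (forall eps, 0 < eps -> exists M, forall m, (M <= m)%nat -> Rabs (u m - L) < eps) ->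
  Rabs (u k - L) <= b.
Proof.
  intros H1 H2. apply Rle_plus_epsilon. intros eps Heps.
  destruct (H2 eps Heps) as [M HM]. specialize (HM (Nat.max M k) ltac:(lia)).
  specialize (H1 (Nat.max M k) ltac:(lia)).
  replace (u k - L) with (- (u (Nat.max M k) - u k) + (u (Nat.max M k) - L)) by ring.
  eapply Rle_trans. apply Rabs_triang. rewrite Rabs_Ropp. lra.
Qed.

Lemma small_pow eta c eps : 0 < eta < 1 -> 0 <= c -> 0 < eps ->
  exists K, forall k, (K <= k)%nat -> c * eta ^ k / (1 - eta) < eps.
Proof.
  intros He Hc Heps.
  destruct (pow_lt_1_zero eta ltac:(rewrite Rabs_pos_eq; lra) (eps * (1 - eta) / (c + 1))) as [K HK].
  { apply Rdiv_lt_0_compat; nra. }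
  exists K. intros k Hk. specialize (HK k Hk). rewrite Rabs_pos_eq in HK by (apply pow_le; lra).
  apply (Rmult_lt_compat_l (c + 1)) in HK; [|lra].
  replace ((c + 1) * (eps * (1 - eta) / (c + 1))) with (eps * (1 - eta)) in HK by (field; lra).
  apply (Rmult_lt_reg_r (1 - eta)). lra.
  replace (c * eta ^ k / (1 - eta) * (1 - eta)) with (c * eta ^ k) by (field; lra).
  pose proof (pow_le eta k ltac:(lra)). nra.
Qed.

Theorem theorem11 (N : nat) (astar : zseq) (A : nat -> zseq) (n : nat) :
  (0 < N)%nat ->
  supported_in N astar ->
  convergent N (fun _ => astar) ->
  (0 < n)%nat ->
  op_norm (Nat.iter n (subdiv N (diffmask N astar))) < 1 ->
  (forall k, supported_in N (A k)) ->
  (forall k, reproduces_constants N (A k)) ->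
  (forall eps, 0 < eps -> exists K : nat, forall k, (K <= k)%nat ->
      mask_norm N (fun i => A k i - astar i) < eps) ->
  convergent N A /\
  (forall r eta : R,
     0 <= r -> r ^ n = op_norm (Nat.iter n (subdiv N (diffmask N astar))) ->
     r < eta -> eta < 1 ->
     exists C : R, 0 < C /\
       forall f0 : zseq, bounded_seq f0 ->
       forall F : R -> R, is_limit_function N A f0 F ->
       forall (k : nat) (x : R),
         Rabs (F x - PL (S k) (level N A f0 (S k)) x) <= C * eta ^ k * seq_norm (Dseq f0)).
Proof.
  intros _ _ _ Hn Hmu1 Hs Hr Hsim.
  set (mu := op_norm (Nat.iter n (subdiv N (diffmask N astar)))) in *.
  split.
  - set (mu' := Rmax mu 0).
    assert (m1 : 0 <= mu' < 1) by (unfold mu'; split; [apply Rmax_r|apply Rmax_lub_lt; lra]).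
    assert (Hn' : 1 <= INR n) by (apply (le_INR 1); lia).
    set (eta := 1 - (1 - mu') / (2 * INR n)).
    assert (Hx : 0 <= (1 - mu') / (2 * INR n) <= 1 / 2).
    { split. apply Rdiv_le_0_compat; lra. apply (Rmult_le_reg_r (2 * INR n)). lra.
      unfold Rdiv. rewrite Rmult_assoc, Rinv_l by lra. nra. }
    assert (He : 0 < eta < 1).
    { unfold eta. split. lra. assert (0 < (1 - mu') / (2 * INR n)) by (apply Rdiv_lt_0_compat; lra). lra. }
    assert (Hmu : mu < eta ^ n).
    { pose proof (bernoulli ((1 - mu') / (2 * INR n)) ltac:(lra) n). fold eta in H.
      replace (INR n * ((1 - mu') / (2 * INR n))) with ((1 - mu') / 2) in H by (field; lra).
      pose proof (Rmax_l mu 0). fold mu' in H0. lra. }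
    destruct (core N astar A n eta Hn Hs Hr Hsim ltac:(lra) ltac:(lra) Hmu) as [K [K0 HK]].
    intros f0 Hf0.
    set (D := seq_norm (Dseq f0)).
    assert (D0 : 0 <= D).
    { apply seq_norm_ge0. destruct Hf0 as [M HM]. exists (M + M). intros j. unfold Dseq.
      unfold Rminus. eapply Rle_trans. apply Rabs_triang. rewrite Rabs_Ropp. pose proof (HM j). pose proof (HM (j-1)%Z). lra. }
    set (u := fun x k => PL k (level N A f0 k) x).
    assert (Tele : forall x k m, (k <= m)%nat -> Rabs (u x m - u x k) <= K * D * eta ^ k / (1 - eta)).
    { intros x. apply tele; auto. nra. intros k. apply HK; auto. }
    assert (Cau : forall x, Cauchy_crit (u x)).
    { intros x eps Heps. destruct (small_pow eta (K * D) (eps / 2) He ltac:(nra) ltac:(lra)) as [M HM].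
      exists M. intros p q Hp Hq. unfold Rdist.
      pose proof (Tele x M p Hp). pose proof (Tele x M q Hq). specialize (HM M (le_n M)).
      replace (u x p - u x q) with ((u x p - u x M) - (u x q - u x M)) by ring.
      unfold Rminus at 1. eapply Rle_lt_trans. apply Rabs_triang. rewrite Rabs_Ropp. lra. }
    exists (fun x => proj1_sig (Rcomplete.R_complete (u x) (Cau x))).
    intros eps Heps. destruct (small_pow eta (K * D) eps He ltac:(nra) Heps) as [M HM].
    exists M. intros k Hk x.
    destruct (Rcomplete.R_complete (u x) (Cau x)) as [Lx HLx]. simpl.
    eapply Rle_lt_trans. apply (tail (u x) Lx). intros m Hm. apply Tele; auto.
    intros e He'. destruct (HLx e He') as [M' HM']. exists M'. intros m Hm. apply HM'; auto.
    apply HM; auto.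
  - intros r eta Hr0 Hrn Hre He1.
    assert (He : 0 < eta < 1) by lra.
    assert (Hmu : mu < eta ^ n).
    { rewrite <- Hrn. destruct n. lia. apply pow_lt_S; auto. }
    destruct (core N astar A n eta Hn Hs Hr Hsim ltac:(lra) ltac:(lra) Hmu) as [K [K0 HK]].
    exists (K * eta / (1 - eta) + 1). split.
    { assert (0 <= K * eta / (1 - eta)) by (apply Rdiv_le_0_compat; nra). lra. }
    intros f0 Hf0 F HF k x.
    set (D := seq_norm (Dseq f0)).
    assert (D0 : 0 <= D).
    { apply seq_norm_ge0. destruct Hf0 as [M HM]. exists (M + M). intros j. unfold Dseq.
      unfold Rminus. eapply Rle_trans. apply Rabs_triang. rewrite Rabs_Ropp. pose proof (HM j). pose proof (HM (j-1)%Z). lra. }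
    set (u := fun k => PL k (level N A f0 k) x).
    rewrite Rabs_minus_sym.
    eapply Rle_trans. apply (tail u (F x) (K * D * eta ^ (S k) / (1 - eta))).
    + intros m Hm. apply tele; auto. nra. intros j. apply HK; auto.
    + intros e He'. destruct (HF e He') as [M HM]. exists M. intros m Hm. apply HM; auto.
    + simpl. pose proof (pow_le eta k ltac:(lra)).
      assert (0 <= D * eta ^ k) by nra.
      replace (K * D * (eta * eta ^ k) / (1 - eta)) with (K * eta / (1 - eta) * (D * eta ^ k)) by (field; lra).
      replace ((K * eta / (1 - eta) + 1) * eta ^ k * D) with ((K * eta / (1 - eta) + 1) * (D * eta ^ k)) by ring.
      apply Rmult_le_compat_r; lra.
Qed.
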